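(* Let $\mathcal{C}$ be a category and $A$ an object of $\mathcal{C}$ with $D(A)=k$ finite. Then every sequence $\cdots\leqslant^d X_i\leqslant^d\cdots\leqslant^d X_1\leqslant^d A$ of objects of $\mathcal{C}$ contains at most $k$ pairwise non-isomorphic objects.
   Context: In a category $\mathcal{C}$, $X\leqslant^d Y$ means there are morphisms $f:X\to Y$, $g:Y\to X$ with $g\circ f=\mathrm{id}_X$; $X<^p Y$ means $X\leqslant^d Y$ and $X\not\cong Y$. A chain of length $k$ for $A$ is $X_k<^p\cdots<^p X_1\leqslant^d A$; the depth $D(A)$ is the supremum of the lengths of all chains for $A$. *)

(* Defs.v *)
From Stdlib Require Import Arith.

Record Category := {
  Ob :> Type;
  Hom : Ob -> Ob -> Type;
  comp : forall {a b c : Ob}, Hom b c -> Hom a b -> Hom a c;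
  id : forall a : Ob, Hom a a;
  comp_assoc : forall (a b c d : Ob) (h : Hom c d) (g : Hom b c) (f : Hom a b),
      comp h (comp g f) = comp (comp h g) f;
  comp_id_l : forall (a b : Ob) (f : Hom a b), comp (id b) f = f;
  comp_id_r : forall (a b : Ob) (f : Hom a b), comp f (id a) = f
}.

Arguments Hom {_} _ _.
Arguments comp {_ a b c} _ _.
Arguments id {_} _.

Definition iso {C : Category} (X Y : C) : Prop :=
  exists (f : Hom X Y) (g : Hom Y X), comp g f = id X /\ comp f g = id Y.

(* X ≤^d Y : X is a retract (direct summand) of Y *)
Definition retract_le {C : Category} (X Y : C) : Prop :=
  exists (f : Hom X Y) (g : Hom Y X), comp g f = id X.

Definition proper_retract {C : Category} (X Y : C) : Prop :=
  retract_le X Y /\ ~ iso X Y.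

(* A chain of length k for A:  X_k <^p ... <^p X_1 ≤^d A.
   We index X_1, ..., X_k as X 0, ..., X (k-1).  The chain of length 0 is
   the empty chain. *)
Definition is_chain {C : Category} (A : C) (k : nat) (X : nat -> C) : Prop :=
  (0 < k -> retract_le (X 0) A) /\
  (forall i, S i < k -> proper_retract (X (S i)) (X i)).

Definition has_chain {C : Category} (A : C) (k : nat) : Prop :=
  exists X : nat -> C, is_chain A k X.

(* D(A) = k (finite): k is the supremum of lengths of chains for A,
   i.e. the maximum, since lengths are natural numbers. *)
Definition depth_eq {C : Category} (A : C) (k : nat) : Prop :=
  has_chain A k /\ (forall m, has_chain A m -> m <= k).

(* Main.v *)
Require Import Defs.
From Stdlib Require Import Arith Lia.

Lemma rl_refl {C : Category} (x : C) : retract_le x x.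
Proof. exists (id x), (id x). apply comp_id_l. Qed.

Lemma rl_trans {C : Category} (x y z : C) :
  retract_le x y -> retract_le y z -> retract_le x z.
Proof.
  intros [f1 [g1 H1]] [f2 [g2 H2]].
  exists (comp f2 f1), (comp g1 g2).
  rewrite <- comp_assoc, (comp_assoc _ _ _ _ _ g2 f2 f1), H2, comp_id_l. exact H1.
Qed.

Section S.
Variables (C : Category) (A : C) (X : nat -> C)
  (HX0 : retract_le (X 0) A) (HXs : forall i, retract_le (X (S i)) (X i)).

Lemma mono : forall d i, retract_le (X (d + i)) (X i).
Proof.
  induction d; intros i; simpl. apply rl_refl.
  eapply rl_trans. apply HXs. apply IHd.
Qed.

Lemma mono' i j : i <= j -> retract_le (X j) (X i).
Proof. intros H. replace j with ((j - i) + i) by lia. apply mono. Qed.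

Lemma toA j : retract_le (X j) A.
Proof. eapply rl_trans. apply (mono' 0 j); lia. exact HX0. Qed.

Lemma maxpos (idx : nat -> nat) : forall n, exists p, p < S n /\ forall i, i < S n -> idx i <= idx p.
Proof.
  induction n.
  - exists 0. split. lia. intros i Hi. replace i with 0 by lia. lia.
  - destruct IHn as [p [Hp Hm]].
    destruct (le_lt_dec (idx (S n)) (idx p)).
    + exists p. split. lia. intros i Hi. destruct (Nat.eq_dec i (S n)). subst; lia. apply Hm; lia.
    + exists (S n). split. lia. intros i Hi. destruct (Nat.eq_dec i (S n)). subst; lia.
      specialize (Hm i ltac:(lia)). lia.
Qed.

Lemma build : forall n idx,
  (forall i j, i < n -> j < n -> i <> j -> ~ iso (X (idx i)) (X (idx j))) ->
  exists Y, is_chain A n Y /\ forall m, m < n -> exists i, i < n /\ Y m = X (idx i).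
Proof.
  induction n; intros idx Hni.
  - exists X. split. split; intros; lia. intros; lia.
  - destruct (maxpos idx n) as [p [Hp Hm]].
    set (idx' := fun i => if lt_dec i p then idx i else idx (S i)).
    assert (Hsh : forall i, i < n -> exists q, q < S n /\ q <> p /\ idx' i = idx q).
    { intros i Hi. unfold idx'. destruct (lt_dec i p).
      - exists i. repeat split; lia.
      - exists (S i). repeat split; lia. }
    destruct (IHn idx') as [Y [[HY0 HYs] HYm]].
    { intros i j Hi Hj Hij. unfold idx'.
      destruct (lt_dec i p), (lt_dec j p); apply Hni; lia. }
    exists (fun m => if Nat.eq_dec m n then X (idx p) else Y m). split; [split|].
    + intros _. destruct (Nat.eq_dec 0 n). apply toA. apply HY0; lia.
    + intros i Hi. destruct (Nat.eq_dec (S i) n).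
      * destruct (Nat.eq_dec i n). lia.
        destruct (HYm i ltac:(lia)) as [i' [Hi' Heq]]. rewrite Heq.
        destruct (Hsh i' Hi') as [q [Hq [Hqp Hq']]]. rewrite Hq'.
        split. apply mono'. apply Hm; lia.
        apply Hni; lia.
      * destruct (Nat.eq_dec i n). lia. apply HYs; lia.
    + intros m Hmn. destruct (Nat.eq_dec m n). exists p; split; auto.
      destruct (HYm m ltac:(lia)) as [i' [Hi' Heq]].
      destruct (Hsh i' Hi') as [q [Hq [Hqp Hq']]]. exists q. split. auto. rewrite Heq, Hq'. auto.
Qed.
End S.

Theorem proposition2p11 (C : Category) (A : C) (k : nat) (Hk : depth_eq A k)
    (X : nat -> C)
    (HX0 : retract_le (X 0) A)
    (HXs : forall i, retract_le (X (S i)) (X i)) :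
  forall (n : nat) (idx : nat -> nat),
    (forall i j, i < n -> j < n -> i <> j -> ~ iso (X (idx i)) (X (idx j))) ->
    n <= k.
Proof.
  intros n idx H.
  destruct (build C A X HX0 HXs n idx H) as [Y [HY _]].
  apply (proj2 Hk). exists Y. exact HY.
Qed.
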